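(* Let $\mathcal{X}_{obs}\subset\mathbb{R}^n$ be a nonempty compact convex set. Let $x_0^{plan},\dots,x_N^{plan}\in\mathbb{R}^n$ with $x_{j}^{plan}\ne x_{j-1}^{plan}$, let $0=t_0<t_1<\dots<t_N=T$, and let $x^{plan}(t)$ be the piecewise-linear path with $x^{plan}(t_j)=x_j^{plan}$, linear on each $[t_{j-1},t_j]$; let $\mathcal{S}_j$ be the segment from $x_{j-1}^{plan}$ to $x_j^{plan}$ and assume $\mathcal{S}_j\cap\mathcal{X}_{obs}=\emptyset$ for all $j$. Let $\pmb{x}^{sys}(t)=x^{plan}(t)+R^{1/2}W(t)$, $t\in[0,T]$, where $W$ is a standard $n$-dimensional Brownian motion from the origin and $R$ is symmetric positive definite (equivalently, $d\pmb{x}^{sys}=v_j^{plan}dt+R^{1/2}dW$ on $[t_{j-1},t_j)$ with $v_j^{plan}(t_j-t_{j-1})=x_j^{plan}-x_{j-1}^{plan}$, and $\pmb{x}^{sys}(0)=x_0^{plan}$). For each $j$, let $(y_1^*,y_2^* )$ minimize $\|y_1-y_2\|$ over $y_1\in\mathcal{X}_{obs}$, $y_2\in\mathcal{S}_j$, set $d_j=\|y_1^*-y_2^*\|$, $a_j=(y_1^*-y_2^* )/d_j$, $\pmb{w}_j(t)=a_j^T(\pmb{x}^{sys}(t)-x^{plan}(t))$, $\mathcal{E}_j=\{\max_{t\in[t_{j-1},t_j]}\pmb{w}_j(t)\ge d_j\}$ and $p_j=P(\mathcal{E}_j)$. For each $j$ choose a discretization $t_{j-1}=\hat t_j^0<\dots<\hat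 t_j^{r_j}=t_j$, let $\mathcal{D}_j=\bigcap_{i=0}^{r_j}\{\pmb{w}_j(\hat t_j^i)<d_j\}$ and $p_{j,j+1}^{LB}=1-P(\mathcal{D}_j)-P(\mathcal{D}_{j+1})+P(\mathcal{D}_j\cap\mathcal{D}_{j+1})$. Then the continuous-time risk $\mathcal{R}=P\big(\exists t\in[0,T]:\ \pmb{x}^{sys}(t)\in\mathcal{X}_{obs}\big)$ satisfies $$\mathcal{R}\le\sum_{j=1}^N p_j\quad\text{and}\quad \mathcal{R}\le\sum_{j=1}^N p_j-\sum_{j=1}^{N-1}p_{j,j+1}^{LB}.$$
   Context: $p_j$ can be evaluated as $P(\pmb{w}_j(t_{j-1})\ge d_j)+2P(\pmb{w}_j(t_{j-1})<d_j,\ \pmb{w}_j(t_j)\ge d_j)$, and $p_{j,j+1}^{LB}$ is a lower bound for $P(\mathcal{E}_j\cap\mathcal{E}_{j+1})$; the second inequality is the paper's ''second-order risk bound'' and the first its ''first-order risk bound''. *)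

(* Defs.v *)
From HB Require Import structures.
From mathcomp Require Import all_boot all_order all_algebra.
From mathcomp Require Import all_classical all_reals all_analysis.

Set Implicit Arguments.
Unset Strict Implicit.
Unset Printing Implicit Defensive.

Import Order.TTheory GRing.Theory Num.Theory.
Import numFieldNormedType.Exports.

Local Open Scope classical_set_scope.
Local Open Scope ring_scope.

Section Defs.
Context {R : realType}.

Definition dotv n (a v : 'rV[R]_n) : R := \sum_(i < n) a 0 i * v 0 i.
Definition enorm n (v : 'rV[R]_n) : R := Num.sqrt (\sum_(i < n) v 0 i ^+ 2).

Definition convex_set_rV n (X : set 'rV[R]_n) : Prop :=
  forall x y l, X x -> X y -> 0 <= l <= 1 -> X (l *: x + (1 - l) *: y).

Definition segment n (x y : 'rV[R]_n) : set 'rV[R]_n :=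
  [set z | exists l : R, 0 <= l <= 1 /\ z = (1 - l) *: x + l *: y].

Definition sym_mx n (M : 'M[R]_n) : Prop := M^T = M.
Definition posdef_mx n (M : 'M[R]_n) : Prop :=
  forall v : 'rV[R]_n, v != 0 -> 0 < (v *m M *m v^T) 0 0.
Definition possemidef_mx n (M : 'M[R]_n) : Prop :=
  forall v : 'rV[R]_n, 0 <= (v *m M *m v^T) 0 0.

End Defs.

Section Prob.
Context {d : measure_display} {Omega : measurableType d} {R : realType}.
Variable P : probability Omega R.

(** Mutual independence of a finite family of real random variables:
    the joint law is the product of the marginals (taking B i = setT
    recovers the product rule for every subfamily). *)
Definition mutual_indep (I : finType) (X : I -> Omega -> R) : Prop :=
  forall B : I -> set R, (forall i, measurable (B i)) ->
    P (\bigcap_(i in [set: I]) (X i @^-1` B i)) =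
    (\prod_(i : I) P (X i @^-1` B i))%E.

(** Standard n-dimensional Brownian motion started at the origin, indexed by
    t in [0, +oo[ (values at t < 0 are irrelevant):
    - W 0 = 0,
    - continuous sample paths (every coordinate, every outcome),
    - each coordinate W t _ 0 i (t >= 0) is a random variable,
    - for every partition 0 = s_0 < s_1 < ... < s_k, the increments of all
      coordinates W(s_{m+1})_i - W(s_m)_i are mutually independent and
      N(0, s_{m+1} - s_m) distributed (normal_prob takes the std. deviation). *)
Definition std_brownian n (W : R -> Omega -> 'rV[R]_n) : Prop :=
  [/\ forall w, W 0 w = 0,
      forall w (i : 'I_n), {within `[0, +oo[%classic,
                              continuous (fun t => W t w 0 i)},
      forall t (i : 'I_n), 0 <= t -> measurable_fun setT (fun w => W t w 0 i) &
      forall (k : nat) (s : nat -> R), s 0%N = 0 ->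
        (forall m, (m < k)%N -> s m < s m.+1) ->
        mutual_indep (fun p : 'I_n * 'I_k =>
                        fun w => W (s p.2.+1) w 0 p.1 - W (s p.2) w 0 p.1)
        /\ forall (i : 'I_n) (m : 'I_k) (B : set R), measurable B ->
             P ((fun w => W (s m.+1) w 0 i - W (s m) w 0 i) @^-1` B) =
             normal_prob 0 (Num.sqrt (s m.+1 - s m)) B].

End Prob.

(* Main.v *)
Require Import Defs.
From HB Require Import structures.
From mathcomp Require Import all_boot all_order all_algebra.
From mathcomp Require Import all_classical all_reals all_analysis.
From mathcomp Require Import ring lra zify.

Import Order.TTheory GRing.Theory Num.Theory.
Import numFieldNormedType.Exports.

Local Open Scope classical_set_scope.
Local Open Scope ring_scope.
Section PR.
Context {R : realType} {d : measure_display} {Omega : measurableType d}.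
Variable P : probability Omega R.

Definition pr (A : set Omega) : R := fine (P A).

Lemma prE A : measurable A -> P A = (pr A)%:E.
Proof.
move=> mA; rewrite /pr fineK //; rewrite ge0_fin_numE //.
by apply: (le_lt_trans (probability_le1 P mA)); rewrite ltry.
Qed.

Lemma pr_ge0 A : 0 <= pr A.
Proof. by rewrite /pr fine_ge0. Qed.

Lemma pr_le A B : measurable A -> measurable B -> A `<=` B -> pr A <= pr B.
Proof.
move=> mA mB AB; rewrite -lee_fin -!prE //.
by apply: le_measure => //; rewrite inE.
Qed.

Lemma pr_le1 A : measurable A -> pr A <= 1.
Proof. by move=> mA; rewrite -lee_fin -prE // probability_le1. Qed.

Lemma pr_U A B : measurable A -> measurable B ->
  pr (A `|` B) = pr A + pr B - pr (A `&` B).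
Proof.
move=> mA mB; apply: EFin_inj; rewrite -(prE _ (measurableU _ _ mA mB)).
rewrite EFinB EFinD -(prE _ mA) -(prE _ mB) -(prE _ (measurableI _ _ mA mB)).
rewrite measureUfinl //.
by apply: (le_lt_trans (probability_le1 P mA)); rewrite ltry.
Qed.

Lemma pr_C A : measurable A -> pr (~` A) = 1 - pr A.
Proof.
move=> mA; apply: EFin_inj; rewrite -(prE _ (measurableC mA)).
by rewrite probability_setC // EFinB -(prE _ mA).
Qed.

Lemma pr0 : pr set0 = 0.
Proof. by rewrite /pr measure0. Qed.

Lemma hunter (E : nat -> set Omega) m :
  (forall j, (1 <= j <= m)%N -> measurable (E j)) ->
  pr (\big[setU/set0]_(1 <= j < m.+1) E j) <=
  \sum_(1 <= j < m.+1) pr (E j) - \sum_(1 <= j < m) pr (E j `&` E j.+1).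
Proof.
elim: m => [|m IH] mE.
  by rewrite !big_geq // pr0 subrr.
have mU : measurable (\big[setU/set0]_(1 <= j < m.+1) E j).
  by rewrite big_nat_cond; apply: bigsetU_measurable => j /andP[/andP[h1 h2] _]; apply: mE; lia.
have mE' : measurable (E m.+1) by apply: mE; rewrite leqnn.
rewrite big_nat_recr //= [X in X - _]big_nat_recr //= pr_U //.
case: m IH mE mU mE' => [|m] IH mE mU mE'.
  by rewrite !big_geq // pr0 !add0r !subr0 set0I pr0 subr0.
set U := \big[setU/set0]_(1 <= j < m.+2) E j.
rewrite [\sum_(1 <= j < m.+2) pr (E j `&` E j.+1)]big_nat_recr //=.
have mEm : measurable (E m.+1) by apply: mE; lia.
have mE2 : forall j, (1 <= j <= m.+1)%N -> measurable (E j) by move=> j hj; apply: mE; lia.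
move/(_ mE2) : IH => IH'.
have : pr (E m.+1 `&` E m.+2) <= pr (U `&` E m.+2).
  apply: pr_le; try exact: measurableI.
  apply: setSI; rewrite /U big_nat_recr //=; exact: subsetUr.
move: IH'; set a := pr _; set b := pr _; set c := pr _.
move=> h1 h2.
lra.
Qed.
End PR.
Section Geo.
Context {R : realType} {n : nat}.
Implicit Types u v z : 'rV[R]_n.

Lemma msq (x : R) : 0 <= x * x.
Proof. by rewrite -expr2 sqr_ge0. Qed.

Lemma dotvC u v : dotv u v = dotv v u.
Proof. by apply: eq_bigr => i _; rewrite mulrC. Qed.

Lemma dotvDr u v z : dotv u (v + z) = dotv u v + dotv u z.
Proof. by rewrite /dotv -big_split; apply: eq_bigr => i _; rewrite mxE mulrDr. Qed.

Lemma dotvZr u v (c : R) : dotv u (c *: v) = c * dotv u v.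
Proof. by rewrite /dotv mulr_sumr; apply: eq_bigr => i _; rewrite mxE mulrCA. Qed.

Lemma dotvNr u v : dotv u (- v) = - dotv u v.
Proof. by rewrite /dotv -sumrN; apply: eq_bigr => i _; rewrite mxE mulrN. Qed.

Lemma dotvBr u v z : dotv u (v - z) = dotv u v - dotv u z.
Proof. by rewrite dotvDr dotvNr. Qed.

Lemma dotvDl u v z : dotv (v + z) u = dotv v u + dotv z u.
Proof. by rewrite dotvC dotvDr !(dotvC u). Qed.

Lemma dotvZl u v (c : R) : dotv (c *: v) u = c * dotv v u.
Proof. by rewrite dotvC dotvZr dotvC. Qed.

Lemma dotv_ge0 u : 0 <= dotv u u.
Proof. by apply: sumr_ge0 => i _; rewrite msq. Qed.

Lemma enormE u : enorm u = Num.sqrt (dotv u u).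
Proof. by rewrite /enorm /dotv; congr Num.sqrt; apply: eq_bigr => i _; rewrite expr2. Qed.

Lemma enorm_sq u : enorm u ^+ 2 = dotv u u.
Proof. by rewrite enormE sqr_sqrtr // dotv_ge0. Qed.

Lemma enorm_le u v : enorm u <= enorm v -> dotv u u <= dotv v v.
Proof. by rewrite !enormE ler_sqrt // dotv_ge0. Qed.

Lemma dotv_eq0 u : dotv u u = 0 -> u = 0.
Proof.
move=> h; apply/rowP => i; rewrite mxE.
have : \sum_(k < n) u 0 k * u 0 k = 0 := h.
move/eqP; rewrite psumr_eq0; last by move=> k _; rewrite msq.
move=> /allP /(_ i (mem_index_enum _)) /implyP /(_ isT).
by rewrite mulf_eq0 orbb => /eqP.
Qed.

Lemma var_ineq u v :
  (forall l : R, 0 < l <= 1 -> dotv u u <= dotv (u + l *: v) (u + l *: v)) ->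
  0 <= dotv u v.
Proof.
move=> H; rewrite leNgt; apply/negP => uv.
have expand l : dotv (u + l *: v) (u + l *: v) =
    dotv u u + 2 * l * dotv u v + l ^+ 2 * dotv v v.
  rewrite !dotvDl !dotvDr !dotvZl !dotvZr (dotvC v u); ring.
have vv0 : 0 < dotv v v.
  rewrite lt_neqAle dotv_ge0 andbT; apply/negP => /eqP vv.
  have h1 : 0 < (1:R) <= 1 by rewrite ltr01 lexx.
  have := H 1 h1; rewrite expand -vv; lra.
pose l := Num.min 1 (- dotv u v / dotv v v).
have l0 : 0 < l by rewrite lt_min ltr01 /= divr_gt0 // oppr_gt0.
have l1 : l <= 1 by rewrite ge_min lexx.
have lv : l * dotv v v <= - dotv u v.
  by rewrite -ler_pdivlMr // ge_min lexx orbT.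
have := H l; rewrite l0 l1 expand => /(_ isT).
have : l * (l * dotv v v) <= l * (- dotv u v) by rewrite ler_pM2l.
rewrite expr2; nra.
Qed.

Lemma sep_ineq (K : set 'rV[R]_n) (x0 x1 y1 y2 : 'rV[R]_n) :
  convex_set_rV K -> K y1 -> segment x0 x1 y2 ->
  (forall z1 z2, K z1 -> segment x0 x1 z2 -> enorm (y1 - y2) <= enorm (z1 - z2)) ->
  forall z s, K z -> segment x0 x1 s ->
  dotv (y1 - y2) (y1 - y2) <= dotv (y1 - y2) (z - s).
Proof.
move=> cK Ky1 Sy2 Hmin z s Kz Ss.
set u := y1 - y2.
have h1 : 0 <= dotv u (z - y1).
  apply: var_ineq => l /andP[l0 l1].
  have Kp : K (l *: z + (1 - l) *: y1) by apply: cK => //; rewrite ltW.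
  have := enorm_le _ _ (Hmin _ _ Kp Sy2).
  suff -> : l *: z + (1 - l) *: y1 - y2 = u + l *: (z - y1) by [].
  by apply/rowP => i; rewrite !mxE; ring.
have h2 : 0 <= dotv u (y2 - s).
  apply: var_ineq => l /andP[l0 l1].
  have Sy2' := Sy2; have Ss' := Ss.
  case: Sy2' => l2 [/andP[l20 l21] Ey2]; case: Ss' => ls [/andP[ls0 ls1] Es].
  have Sp : segment x0 x1 (y2 + l *: (s - y2)).
    exists (l2 + l * (ls - l2)); split.
      have a1 : 0 <= (1 - l) * l2 by apply: mulr_ge0; lra.
      have a2 : 0 <= l * ls by apply: mulr_ge0; lra.
      have a3 : (1 - l) * l2 <= (1 - l) * 1 by apply: ler_wpM2l; lra.
      have a4 : l * ls <= l * 1 by apply: ler_wpM2l; lra.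
      apply/andP; split; lra.
    by rewrite Ey2 Es; apply/rowP => i; rewrite !mxE; ring.
  have := enorm_le _ _ (Hmin _ _ Ky1 Sp).
  suff -> : y1 - (y2 + l *: (s - y2)) = u + l *: (y2 - s) by [].
  by apply/rowP => i; rewrite !mxE; ring.
have -> : z - s = (z - y1) + u + (y2 - s).
  by apply/rowP => i; rewrite !mxE; ring.
rewrite (dotvDr u (z - y1 + u)) (dotvDr u (z - y1) u); lra.
Qed.
End Geo.
Section Meas.
Context {R : realType} {d : measure_display} {Omega : measurableType d}.

Lemma fin_min (I : finType) (Q : I -> R -> Prop) :
  (forall i e e', 0 < e' <= e -> Q i e -> Q i e') ->
  (forall i, exists2 e, 0 < e & Q i e) ->
  exists2 e, 0 < e & forall i, Q i e.
Proof.
move=> mono ex.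
suff : forall s : seq I, exists2 e, 0 < e & forall i, i \in s -> Q i e.
  by move=> /(_ (enum I)) [e e0 he]; exists e => // i; apply: he; rewrite mem_enum.
elim=> [|j s [e e0 he]]; first by exists 1 => //.
have [ej ej0 hej] := ex j.
exists (Num.min e ej); first by rewrite lt_min e0 ej0.
move=> i; rewrite in_cons => /orP[/eqP ->|iis].
  by apply: mono hej; rewrite lt_min e0 ej0 /= ge_min lexx orbT.
by apply: mono (he i iis); rewrite lt_min e0 ej0 /= ge_min lexx.
Qed.

Lemma meas_forall (I : finType) (Q : I -> set Omega) :
  (forall i, measurable (Q i)) -> measurable [set w | forall i, Q i w].
Proof.
move=> mQ.
have -> : [set w | forall i, Q i w] = \bigcap_(i in [set: I]) Q i.
  by apply/seteqP; split => [w h i _|w h i]; [exact: h|exact: h].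
by apply: fin_bigcap_measurable => //; exact: finite_finset.
Qed.

Lemma meas_lt (f : Omega -> R) (c e : R) : measurable_fun setT f ->
  measurable [set w | `|f w - c| < e].
Proof.
move=> mf.
have := mf measurableT [set x : R | `|x - c| < e] _.
rewrite setTI; apply.
have -> : [set x : R | `|x - c| < e] = ball c e.
  by apply/seteqP; split => x /=; rewrite -ball_normE /= distrC.
apply: measurable_realfun.open_measurable; exact: ball_open.
Qed.


Definition copen n (U : set 'rV[R]_n) := forall x, U x ->
  exists2 e, 0 < e & forall z : 'rV[R]_n, (forall i, `|x 0 i - z 0 i| < e) -> U z.

Definition rbox n (p : 'rV[rat]_n) (q : rat) : set 'rV[R]_n :=
  [set z | forall i, `|z 0 i - ratr (p 0 i)| < ratr q].

Arguments rbox {n}.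
Arguments copen {n}.

Lemma meas_copen n (v : Omega -> 'rV[R]_n) (U : set 'rV[R]_n) :
  (forall i, measurable_fun setT (fun w => v w 0 i)) -> copen U ->
  measurable [set w | U (v w)].
Proof.
move=> mv oU.
pose B (pq : 'rV[rat]_n * rat) : set Omega :=
  if pselect (rbox pq.1 pq.2 `<=` U) is left _ then [set w | rbox pq.1 pq.2 (v w)]
  else set0.
have -> : [set w | U (v w)] = \bigcup_pq B pq.
  apply/seteqP; split => [w Uw|w [[p q] _]]; last first.
    by rewrite /B /=; case: pselect => // sub; exact: sub.
  have [e e0 he] := oU _ Uw.
  have [q /andP[q0 q1]] : exists q : rat, (0 : R) < ratr q < e / 2.
    have := @rat_in_itvoo R 0 (e / 2); rewrite divr_gt0 // => /(_ isT) [q].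
    by rewrite in_itv /=; exists q.
  have [p hp] : exists p : 'rV[rat]_n, forall i, `|v w 0 i - ratr (p 0 i)| < ratr q.
    have hi : forall i : 'I_n, exists r : rat, `|v w 0 i - ratr r| < ratr q.
      move=> i; have := @rat_in_itvoo R (v w 0 i - ratr q) (v w 0 i + ratr q).
      case => [|r]; first lra.
      rewrite in_itv /= => /andP[h1 h2]; exists r.
      rewrite ltr_norml; apply/andP; split; lra.
    have [f hf] := choice hi.
    by exists (\row_i f i) => i; rewrite mxE.
  exists (p, q) => //; rewrite /B /=.
  case: pselect => [_|nsub]; first exact: hp.
  exfalso; apply: nsub => z hz; apply: he => i.
  have := hp i; have := hz i.
  have := ler_distD (ratr (p 0 i)) (v w 0 i) (z 0 i).
  rewrite (distrC (z 0 i)) (distrC (ratr (p 0 i))); lra.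
apply: countable_bigcupT_measurable => // -[p q].
rewrite /B /=; case: pselect => _; last exact: measurable0.
by apply: meas_forall => i; apply: meas_lt.
Qed.

Lemma GL n (a b : R) (g : R -> Omega -> 'rV[R]_n) (K : set 'rV[R]_n) :
  a <= b ->
  (forall w tau, a <= tau <= b -> forall e, 0 < e ->
     \forall s \near tau, a <= s <= b -> forall i, `|g tau w 0 i - g s w 0 i| < e) ->
  (forall q, a <= q <= b -> forall i, measurable_fun setT (fun w => g q w 0 i)) ->
  (forall x : 'rV[R]_n, (forall e, 0 < e -> exists y, K y /\ forall i, `|x 0 i - y 0 i| < e) -> K x) ->
  measurable [set w | exists tau, a <= tau <= b /\ K (g tau w)].
Proof.
move=> ab Hc Hm HK.
pose Ue (e : R) := [set x : 'rV[R]_n | exists y, K y /\ forall i, `|x 0 i - y 0 i| < e].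
have oU e : copen (Ue e).
  move=> x [y [Ky hy]].
  have H1 : forall i e1 e2, 0 < e2 <= e1 -> `|x 0 i - y 0 i| + e1 < e -> `|x 0 i - y 0 i| + e2 < e.
    by move=> i e1 e2 /andP[_ h] h'; lra.
  have H2 : forall i, exists2 m, 0 < m & `|x 0 i - y 0 i| + m < e.
    by move=> i; exists ((e - `|x 0 i - y 0 i|)/2); have := hy i; lra.
  have [m m0 hm] := @fin_min _ (fun i m => `|x 0 i - y 0 i| + m < e) H1 H2.
  exists m => // z hz; exists y; split => // i.
  have := hz i; have := hm i; have := ler_distD (x 0 i) (z 0 i) (y 0 i).
  rewrite (distrC (z 0 i) (x 0 i)); lra.
pose ek (k : nat) : R := (k.+1%:R)^-1.
have ek0 k : 0 < ek k by rewrite /ek invr_gt0 ltr0n.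
pose Dq k (q : rat) : set Omega :=
  if pselect (a <= ratr q <= b) is left _ then [set w | Ue (ek k) (g (ratr q) w)] else set0.
have -> : [set w | exists tau, a <= tau <= b /\ K (g tau w)] =
    \bigcap_k ((\bigcup_q Dq k q) `|` [set w | Ue (ek k) (g b w)]).
  apply/seteqP; split.
  - move=> w [tau [htau Ktau]] k _.
    have [tb|tb] := eqVneq tau b.
      right; exists (g tau w); split => // i; rewrite tb subrr normr0; exact: ek0.
    left.
    have tb' : tau < b by rewrite lt_neqAle tb; case/andP: htau.
    have := Hc w tau htau (ek k) (ek0 k); move/nbhs_ballP => -[δ /= δ0 hδ].
    have tm : tau < Num.min b (tau + δ) by rewrite lt_min tb' /=; lra.
    have [q] := @rat_in_itvoo R tau (Num.min b (tau + δ)) tm.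
    rewrite in_itv /= lt_min => /andP[q1 /andP[q2 q3]].
    have qab : a <= ratr q <= b.
      by case/andP: htau => h1 h2; apply/andP; split; lra.
    exists q => //; rewrite /Dq; case: pselect => [_|nq]; last by exfalso; apply: nq.
    exists (g tau w); split => // i.
    have := hδ (ratr q) _ qab i; rewrite distrC; apply.
    by rewrite -ball_normE /=; rewrite ltr_distlC; apply/andP; split; lra.
  - move=> w hw; apply: contrapT => nex.
    have cov : forall tau, a <= tau <= b -> exists2 e, 0 < e &
        forall y, K y -> ~ (forall i, `|g tau w 0 i - y 0 i| < e).
      move=> tau htau; apply: contrapT => ne; apply: nex; exists tau; split => //.
      apply: HK => e e0; apply: contrapT => ny; apply: ne; exists e => // y Ky hy.
      by apply: ny; exists y.
    have ncw := (near_covering_withinP _).2 ((compact_near_coveringP _).1 (@segment_compact R a b)).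
    have := ncw nat \oo (fun k s => forall y, K y -> ~ (forall i, `|g s w 0 i - y 0 i| < ek k)) _.
    case => [tau|N _ hN].
      rewrite /= in_itv /= => htau.
      have [e e0 he] := cov tau htau.
      have e20 : 0 < e / 2 by lra.
      have h1 := Hc w tau htau (e / 2) e20.
      have h2 := near_infty_natSinv_lt (PosNum e20).
      near=> s k => hs y Ky hy.
      apply: (he y Ky) => i.
      rewrite /= in_itv /= in hs.
      have h1s : forall i, `|g tau w 0 i - g s w 0 i| < e / 2.
        by move: hs; near: s; exact: h1.
      have h2k : ek k < e / 2 by near: k; exact: h2.
      have := hy i; have := h1s i; move: h2k => /=.
      have := ler_distD (g s w 0 i) (g tau w 0 i) (y 0 i).
      move=> h3 h4 h5 h6; apply: (le_lt_trans h3); rewrite [e in _ < e]splitr.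
      by apply: ltrD => //; exact: lt_trans h6 h4.
    have hk := hN N (leqnn N).
    case: (hw N I) => [[q _ hq]|[y [Ky hy]]].
      move: hq; rewrite /Dq; case: pselect => // hq [y [Ky hy]].
      apply: (hk (ratr q) _ y Ky hy); by rewrite /= in_itv.
    apply: (hk b _ y Ky hy); by rewrite /= in_itv /= ab lexx.
apply: bigcapT_measurable => k; apply: measurableU.
  apply: bigcupT_measurable_rat => q; rewrite /Dq; case: pselect => [hq|_].
    by apply: (@meas_copen n (g (ratr q))); [exact: Hm | exact: oU].
  exact: measurable0.
have hb : a <= b <= b by rewrite ab lexx.
by apply: (@meas_copen n (g b)); [exact: Hm | exact: oU].
Unshelve. all: by end_near.
Qed.
End Meas.

Lemma closed_coord (R : realType) n (X : set 'rV[R]_n) : compact X ->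
  forall x : 'rV[R]_n, (forall e, 0 < e -> exists y, X y /\ forall i, `|x 0 i - y 0 i| < e) -> X x.
Proof.
move=> cX x hx.
have : closed X by apply: compact_closed => //; exact: norm_hausdorff.
rewrite closure_id => ->.
move=> B /nbhs_ballP [e /= e0 hB].
have [y [Xy hy]] := hx e e0.
exists y; split => //; apply: hB.
split => // i j; rewrite ord1.
by rewrite /ball /=.
Qed.

Lemma meas_ltc (R : realType) (d : measure_display) (Omega : measurableType d)
  (f : Omega -> R) (c : R) : measurable_fun setT f -> measurable [set w | f w < c].
Proof.
move=> mf; have := mf measurableT _ (measurable_itv `]-oo, c[); rewrite setTI.
congr measurable; apply/seteqP; split => w /=; rewrite in_itv /= => //.
Qed.

Lemma bigU_nat (T : Type) (F : nat -> set T) m x :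
  (\big[setU/set0]_(1 <= j < m.+1) F j) x <-> exists j, (1 <= j <= m)%N /\ F j x.
Proof.
elim: m => [|m IH].
  by rewrite big_geq //; split => [//|[j [/andP[h1 h2] _]]]; lia.
rewrite big_nat_recr //=; split.
  case => [/IH [j [hj Fj]]|Fm]; last by exists m.+1; split => //; lia.
  by exists j; split => //; lia.
case => j [hj Fj]; have [jm|jm] := leqP j m.
  by left; apply/IH; exists j; split => //; lia.
right; have jm1 : j = m.+1 by lia.
by rewrite -jm1.
Qed.
Section Cont.
Context {R : realType}.
Variables (A : set R) (tau : R).
Definition Cw (f : R -> R) := f @ within A (nbhs tau) --> f tau.

Lemma Cw_cst c : Cw (fun _ => c).
Proof. exact: cvg_cst. Qed.

Lemma Cw_id : Cw id.
Proof. exact: cvg_within. Qed.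

Lemma Cw_D f g : Cw f -> Cw g -> Cw (fun s => f s + g s).
Proof. by move=> hf hg; apply: cvgD. Qed.

Lemma Cw_M f g : Cw f -> Cw g -> Cw (fun s => f s * g s).
Proof. by move=> hf hg; apply: cvgM. Qed.

Lemma Cw_sum (I : Type) (s : seq I) (F : I -> R -> R) :
  (forall i, Cw (F i)) -> Cw (fun x => \sum_(i <- s) F i x).
Proof.
move=> hF; elim: s => [|i s IH].
  under eq_fun do rewrite big_nil; exact: Cw_cst.
under eq_fun do rewrite big_cons; exact: Cw_D.
Qed.

Lemma Cw_eps f : Cw f -> forall e, 0 < e ->
  \forall s \near tau, A s -> `|f tau - f s| < e.
Proof. by move/cvgrPdist_lt => h e e0; exact: h e e0. Qed.

Lemma Cw_sub (B : set R) (f : R -> R) : A `<=` B -> f @ within B (nbhs tau) --> f tau -> Cw f.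
Proof. by move=> AB h; apply: cvg_trans h; apply: cvg_app; exact: within_subset. Qed.
End Cont.
Theorem mainTheorem3 (R : realType) (d : measure_display)
  (Omega : measurableType d) (P : probability Omega R)
  (n N : nat) (Xobs : set 'rV[R]_n)
  (xp : nat -> 'rV[R]_n) (t : nat -> R) (xplan : R -> 'rV[R]_n)
  (Rm S : 'M[R]_n) (W : R -> Omega -> 'rV[R]_n)
  (y1 y2 : nat -> 'rV[R]_n) (r : nat -> nat) (th : nat -> nat -> R) :
  (* obstacle: nonempty compact convex *)
  Xobs !=set0 -> compact Xobs -> convex_set_rV Xobs ->
  (* waypoints and times 0 = t_0 < t_1 < ... < t_N = T *)
  (0 < N)%N ->
  (forall j, (1 <= j <= N)%N -> xp j != xp j.-1) ->
  t 0%N = 0 ->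
  (forall j, (j < N)%N -> t j < t j.+1) ->
  (* piecewise-linear plan *)
  (forall j tau, (j < N)%N -> t j <= tau <= t j.+1 ->
     xplan tau = xp j + ((tau - t j) / (t j.+1 - t j)) *: (xp j.+1 - xp j)) ->
  (* segments avoid the obstacle *)
  (forall j, (1 <= j <= N)%N -> segment (xp j.-1) (xp j) `&` Xobs = set0) ->
  (* noise: S = R^{1/2} (the symmetric PSD square root of the SPD matrix Rm) *)
  sym_mx Rm -> posdef_mx Rm ->
  sym_mx S -> possemidef_mx S -> S *m S = Rm ->
  std_brownian P W ->
  (* (y1 j, y2 j) minimizes ||y1 - y2|| over Xobs x S_j *)
  (forall j, (1 <= j <= N)%N ->
     [/\ Xobs (y1 j), segment (xp j.-1) (xp j) (y2 j) &
         forall z1 z2, Xobs z1 -> segment (xp j.-1) (xp j) z2 ->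
           enorm (y1 j - y2 j) <= enorm (z1 - z2)]) ->
  (* discretizations t_{j-1} = th j 0 < ... < th j (r j) = t_j *)
  (forall j, (1 <= j <= N)%N ->
     [/\ th j 0%N = t j.-1, th j (r j) = t j &
         forall i, (i < r j)%N -> th j i < th j i.+1]) ->
  let xsys : R -> Omega -> 'rV[R]_n := fun tau w => xplan tau + W tau w *m S in
  let dd : nat -> R := fun j => enorm (y1 j - y2 j) in
  let a : nat -> 'rV[R]_n := fun j => (dd j)^-1 *: (y1 j - y2 j) in
  let ww : nat -> R -> Omega -> R :=
    fun j tau w => dotv (a j) (xsys tau w - xplan tau) in
  let E : nat -> set Omega :=
    fun j => [set w | exists tau, t j.-1 <= tau <= t j /\ dd j <= ww j tau w] in
  let D : nat -> set Omega :=
    fun j => [set w | forall i, (i <= r j)%N -> ww j (th j i) w < dd j] in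
  let pLB : nat -> \bar R :=
    fun j => (1 - P (D j) - P (D j.+1) + P (D j `&` D j.+1))%E in
  let Risk : \bar R :=
    P [set w | exists tau, 0 <= tau <= t N /\ Xobs (xsys tau w)] in
  (Risk <= \sum_(1 <= j < N.+1) P (E j))%E /\
  (Risk <= \sum_(1 <= j < N.+1) P (E j) - \sum_(1 <= j < N) pLB j)%E.
Proof.
move=> Hne Hcomp Hconv HN Hxp Ht0 Ht Hplan Hseg HsymR HposR HsymS HpsdS HSS HW Hy Hth.
move=> xsys dd a ww E D pLB Risk.
case: HW => HW0 HWc HWm HWi.
have tmono : forall i j, (i <= j)%N -> (j <= N)%N -> t i <= t j.
  move=> i j /subnK <-; elim: (j - i)%N => [|k IH] hN; first by rewrite add0n.
  rewrite addSn; apply: le_trans (IH _) (ltW (Ht _ _)); lia.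
have tge0 : forall j, (j <= N)%N -> 0 <= t j.
  by move=> j hj; rewrite -Ht0; apply: tmono.
have tlt : forall j, (1 <= j <= N)%N -> t j.-1 < t j.
  by move=> j hj; have := Ht j.-1 ltac:(lia); rewrite prednK //; lia.
have wwE : forall j tau w, ww j tau w = dotv (a j) (W tau w *m S).
  by move=> j tau w; rewrite /ww /xsys [xplan tau + _]addrC addrK.
have WSE : forall tau w i, (W tau w *m S) 0 i = \sum_k W tau w 0 k * S k i.
  by move=> tau w i; rewrite mxE.
have cW : forall w k (A : set R) tau, A `<=` [set x | 0 <= x] -> 0 <= tau ->
    Cw A tau (fun s => W s w 0 k).
  move=> w k A tau hA t0; apply: (@Cw_sub _ _ _ `[0, +oo[%classic).
    by move=> x /hA /= x0; rewrite in_itv /= andbT.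
  move: (HWc w k) => /subspace_continuousP; apply.
  by rewrite /= in_itv /= andbT.
have cWS : forall w i (A : set R) tau, A `<=` [set x | 0 <= x] -> 0 <= tau ->
    Cw A tau (fun s => (W s w *m S) 0 i).
  move=> w i A tau hA t0.
  have -> : (fun s => (W s w *m S) 0 i) = (fun s => \sum_k W s w 0 k * S k i).
    by apply/funext => s; rewrite WSE.
  apply: Cw_sum => k; apply: Cw_M; [exact: cW | exact: Cw_cst].
have cww : forall j w (A : set R) tau, A `<=` [set x | 0 <= x] -> 0 <= tau ->
    Cw A tau (fun s => ww j s w).
  move=> j w A tau hA t0.
  have -> : (fun s => ww j s w) = (fun s => \sum_i a j 0 i * (W s w *m S) 0 i).
    by apply/funext => s; rewrite wwE.
  apply: Cw_sum => i; apply: Cw_M; [exact: Cw_cst | exact: cWS].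
have mWS : forall q i, 0 <= q -> measurable_fun setT (fun w => (W q w *m S) 0 i).
  move=> q i q0.
  have -> : (fun w => (W q w *m S) 0 i) = (fun w => \sum_k W q w 0 k * S k i).
    by apply/funext => w; rewrite WSE.
  apply: measurable_sum => k; apply: measurable_realfun.measurable_funM; [exact: HWm | exact: measurable_cst].
have mww : forall j q, 0 <= q -> measurable_fun setT (ww j q).
  move=> j q q0.
  have -> : ww j q = (fun w => \sum_i a j 0 i * (W q w *m S) 0 i).
    by apply/funext => w; rewrite wwE.
  apply: measurable_sum => i; apply: measurable_realfun.measurable_funM; [exact: measurable_cst | exact: mWS].
have ddpos : forall j, (1 <= j <= N)%N -> 0 < dd j.
  move=> j hj; have [Ky1 Sy2 _] := Hy j hj.
  rewrite /dd enormE sqrtr_gt0 lt_neqAle dotv_ge0 andbT; apply/negP => /eqP h.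
  have h' := dotv_eq0 _ (esym h); move/eqP: h'; rewrite subr_eq0 => /eqP e12.
  have : (segment (xp j.-1) (xp j) `&` Xobs) (y1 j) by split => //; rewrite e12.
  by rewrite Hseg.
have seg_plan : forall j tau, (1 <= j <= N)%N -> t j.-1 <= tau <= t j ->
    segment (xp j.-1) (xp j) (xplan tau).
  move=> j tau hj htau.
  have hj' : (j.-1 < N)%N by lia.
  have jj : j.-1.+1 = j by lia.
  have := Hplan j.-1 tau hj'; rewrite jj => /(_ htau) ->.
  have dpos : 0 < t j - t j.-1 by rewrite subr_gt0; exact: tlt.
  exists ((tau - t j.-1) / (t j - t j.-1)); split.
    case/andP: htau => h1 h2.
    apply/andP; split; first by apply: divr_ge0; lra.
    rewrite ler_pdivrMr // mul1r; lra.
  by apply/rowP => i; rewrite !mxE; ring.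
have geo : forall j tau w, (1 <= j <= N)%N -> t j.-1 <= tau <= t j ->
    Xobs (xsys tau w) -> dd j <= ww j tau w.
  move=> j tau w hj htau hX.
  have [Ky1 Sy2 Hmin] := Hy j hj.
  have := @sep_ineq _ _ Xobs _ _ _ _ Hconv Ky1 Sy2 Hmin _ _ hX (seg_plan j tau hj htau).
  rewrite /ww /a dotvZl -enorm_sq -/(dd j) => h.
  have dp := ddpos j hj.
  rewrite ler_pdivlMl // -expr2; exact: h.
have thmono : forall j i k, (1 <= j <= N)%N -> (i <= k)%N -> (k <= r j)%N -> th j i <= th j k.
  move=> j i k hj /subnK <-; elim: (k - i)%N => [|m IH] hk; first by rewrite add0n.
  have [_ _ h] := Hth j hj.
  rewrite addSn; apply: le_trans (IH _) (ltW (h _ _)); lia.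
have thin : forall j i, (1 <= j <= N)%N -> (i <= r j)%N -> t j.-1 <= th j i <= t j.
  move=> j i hj hi; have [h0 hr _] := Hth j hj.
  by rewrite -h0 -hr !thmono.
have DE : forall j, (1 <= j <= N)%N -> ~` D j `<=` E j.
  move=> j hj w /= nD; apply: contrapT => nE; apply: nD => i hi.
  rewrite ltNge; apply/negP => h; apply: nE; exists (th j i); split => //.
  exact: thin.
pose Rj j := [set w | exists tau, t j.-1 <= tau <= t j /\ Xobs (xsys tau w)].
have RjE : forall j, (1 <= j <= N)%N -> Rj j `<=` E j.
  move=> j hj w [tau [htau hX]]; exists tau; split => //; exact: geo hX.
have locate : forall m tau, (1 <= m <= N)%N -> 0 <= tau <= t m ->
    exists j, (1 <= j <= m)%N /\ t j.-1 <= tau <= t j.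
  elim => [|m IH] tau hm htau; first by lia.
  have [m0|m0] := eqVneq m 0%N.
    by exists 1%N; split; [lia | rewrite Ht0 -m0].
  have [tm|tm] := leP tau (t m).
    have [j [hj hj']] := IH tau ltac:(lia) ltac:(by case/andP: htau => ->).
    by exists j; split => //; lia.
  by exists m.+1; split; [lia | rewrite /= (ltW tm); case/andP: htau].
have RiskE : [set w | exists tau, 0 <= tau <= t N /\ Xobs (xsys tau w)] =
    \big[setU/set0]_(1 <= j < N.+1) Rj j.
  apply/seteqP; split => w.
    move=> [tau [htau hX]]; apply/bigU_nat.
    have [j [hj htj]] := locate N tau ltac:(lia) htau.
    by exists j; split => //; exists tau.
  move/bigU_nat => [j [hj [tau [htau hX]]]]; exists tau; split => //.
  case/andP: htau => h1 h2; apply/andP; split.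
    by apply: le_trans h1; apply: tge0; lia.
  by apply: le_trans h2 _; apply: tmono; lia.
have Asub : forall j, (1 <= j <= N)%N ->
    [set s | t j.-1 <= s <= t j] `<=` [set x | 0 <= x].
  move=> j hj x /= /andP[h1 _]; apply: le_trans h1; apply: tge0; lia.
have mE : forall j, (1 <= j <= N)%N -> measurable (E j).
  move=> j hj.
  have h0 : forall tau, t j.-1 <= tau <= t j -> 0 <= tau.
    by move=> tau htau; apply: (Asub j hj).
  have -> : E j = [set w | exists tau, t j.-1 <= tau <= t j /\
      [set x : 'rV[R]_1 | dd j <= x 0 0] (\row_(i < 1) ww j tau w)].
    apply/seteqP; split => w [tau [h1 h2]]; exists tau; split => //.
      by rewrite /= mxE.
    by move: h2; rewrite /= mxE.
  apply: (@GL R d Omega 1 (t j.-1) (t j) (fun tau w => \row_(i < 1) ww j tau w)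
    [set x | dd j <= x 0 0] (ltW (tlt j hj))).
  - move=> w tau htau e e0.
    have := Cw_eps _ _ _ (cww j w _ tau (Asub j hj) (h0 _ htau)) _ e0.
    apply: filterS => s hs hs' i; rewrite !mxE; exact: hs.
  - move=> q hq i.
    have -> : (fun w => (\row_(i < 1) ww j q w) 0 i) = ww j q.
      by apply/funext => w; rewrite mxE.
    exact: mww (h0 _ hq).
  - move=> x hx /=; rewrite leNgt; apply/negP => hlt.
    have := hx (dd j - x 0 0); rewrite subr_gt0 => /(_ hlt) [y [hy1 hy2]].
    have := hy2 0; have := ler_norm (y 0 0 - x 0 0); rewrite distrC /=; move: hy1 => /=; lra.
have mD : forall j, (1 <= j <= N)%N -> measurable (D j).
  move=> j hj.
  have -> : D j = \bigcap_(i in [set i | (i <= r j)%N]) [set w | ww j (th j i) w < dd j].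
    by apply/seteqP; split => w h i hi; apply: h.
  apply: bigcap_measurableType => i hi; apply: meas_ltc; apply: mww.
  by apply: (Asub j hj); apply: thin.
have mRj : forall j, (1 <= j <= N)%N -> measurable (Rj j).
  move=> j hj.
  have h0 : forall tau, t j.-1 <= tau <= t j -> 0 <= tau.
    by move=> tau htau; apply: (Asub j hj).
  pose g tau w := xp j.-1 + ((tau - t j.-1) / (t j - t j.-1)) *: (xp j - xp j.-1) + W tau w *m S.
  have gE : forall tau w, t j.-1 <= tau <= t j -> xsys tau w = g tau w.
    move=> tau w htau; rewrite /xsys /g.
    have hj' : (j.-1 < N)%N by lia.
    have jj : j.-1.+1 = j by lia.
    by have := Hplan j.-1 tau hj'; rewrite jj => /(_ htau) ->.
  have gi : forall tau w i, g tau w 0 i =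
      xp j.-1 0 i + ((tau - t j.-1) / (t j - t j.-1)) * (xp j 0 i - xp j.-1 0 i) + (W tau w *m S) 0 i.
    by move=> tau w i; rewrite /g !mxE.
  have -> : Rj j = [set w | exists tau, t j.-1 <= tau <= t j /\ Xobs (g tau w)].
    apply/seteqP; split => w [tau [h1 h2]]; exists tau; split => //.
      by rewrite -gE.
    by rewrite gE.
  apply: (@GL R d Omega n (t j.-1) (t j) g Xobs (ltW (tlt j hj))).
  - move=> w tau htau e e0.
    suff hi : forall i, \forall s \near tau, t j.-1 <= s <= t j -> `|g tau w 0 i - g s w 0 i| < e.
      by apply: filterS (filter_forall _ hi) => s hs hs' i; exact: hs.
    move=> i.
    have cg : Cw [set s | t j.-1 <= s <= t j] tau (fun s => g s w 0 i).
      have -> : (fun s => g s w 0 i) = (fun s => (xp j.-1 0 i + ((s - t j.-1) / (t j - t j.-1)) * (xp j 0 i - xp j.-1 0 i)) + (W s w *m S) 0 i).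
        by apply/funext => s; rewrite gi.
      apply: Cw_D; last exact: cWS (Asub j hj) (h0 _ htau).
      apply: Cw_D; first exact: Cw_cst.
      apply: Cw_M; last exact: Cw_cst.
      apply: Cw_M; last exact: Cw_cst.
      apply: Cw_D; [exact: Cw_id | exact: Cw_cst].
    exact: Cw_eps _ _ _ cg _ e0.
  - move=> q hq i.
    have -> : (fun w => g q w 0 i) = (fun w => (xp j.-1 0 i + ((q - t j.-1) / (t j - t j.-1)) * (xp j 0 i - xp j.-1 0 i)) + (W q w *m S) 0 i).
      by apply/funext => w; rewrite gi.
    apply: measurable_realfun.measurable_funD; first exact: measurable_cst.
    exact: mWS (h0 _ hq).
  - exact: closed_coord.
set RS := [set w | exists tau, 0 <= tau <= t N /\ Xobs (xsys tau w)].
have mRS : measurable RS.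
  rewrite /RS RiskE big_nat_cond; apply: bigsetU_measurable => j /andP[hj _]; apply: mRj; lia.
set UE := \big[setU/set0]_(1 <= j < N.+1) E j.
have mUE : measurable UE.
  rewrite /UE big_nat_cond; apply: bigsetU_measurable => j /andP[hj _]; apply: mE; lia.
have h1 : pr P RS <= pr P UE.
  apply: pr_le => //; rewrite /RS RiskE => w /bigU_nat [j [hj hw]].
  by apply/bigU_nat; exists j; split => //; exact: RjE.
have h2 := @hunter _ _ _ P E N mE.
have h3 : \sum_(1 <= j < N) (1 - pr P (D j) - pr P (D j.+1) + pr P (D j `&` D j.+1)) <=
          \sum_(1 <= j < N) pr P (E j `&` E j.+1).
  apply: ler_sum_nat => j hj.
  have hj1 : (1 <= j <= N)%N by lia.
  have hj2 : (1 <= j.+1 <= N)%N by lia.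
  have -> : 1 - pr P (D j) - pr P (D j.+1) + pr P (D j `&` D j.+1) = pr P (~` D j `&` ~` D j.+1).
    have mDj := mD j hj1; have mDj1 := mD j.+1 hj2.
    rewrite -setCU (@pr_C _ _ _ P _ (measurableU _ _ mDj mDj1)) (@pr_U _ _ _ P _ _ mDj mDj1); lra.
  apply: pr_le; [apply: measurableI; apply: measurableC; exact: mD
                |apply: measurableI; exact: mE | ].
  by apply: setISS; apply: DE.
have h4 : 0 <= \sum_(1 <= j < N) pr P (E j `&` E j.+1).
  by apply: sumr_ge0 => j _; exact: pr_ge0.
have sE : \sum_(1 <= j < N.+1) P (E j) = (\sum_(1 <= j < N.+1) pr P (E j))%:E.
  rewrite -sumEFin; apply: eq_big_nat => j hj; apply: prE; apply: mE; lia.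
have sL : \sum_(1 <= j < N) pLB j =
    (\sum_(1 <= j < N) (1 - pr P (D j) - pr P (D j.+1) + pr P (D j `&` D j.+1)))%:E.
  rewrite -sumEFin; apply: eq_big_nat => j hj.
  have hj1 : (1 <= j <= N)%N by lia.
  have hj2 : (1 <= j.+1 <= N)%N by lia.
  rewrite /pLB (prE P _ (mD j hj1)) (prE P _ (mD j.+1 hj2)).
  rewrite (prE P _ (measurableI _ _ (mD j hj1) (mD j.+1 hj2))).
  by rewrite EFinD !EFinB.
rewrite /Risk -/RS (prE P _ mRS) sE sL -EFinB !lee_fin.
move: h1 h2 h3 h4; rewrite -/UE.
set x1 := pr P RS; set x2 := pr P UE.
set s1 := \sum_(1 <= j < N.+1) pr P (E j).
set s2 := \sum_(1 <= j < N) pr P (E j `&` E j.+1).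
set s3 := \sum_(1 <= j < N) _.
move=> *; split; lra.
Qed.
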